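(* Let $\mathcal D$ be any probability distribution over $\mathbb R$ and let $(N,u)\sim H(n,\mathcal D)$ be a random additively separable hedonic game. Then $$\lim_{n\to\infty}\mathbb P\big((N,u)\text{ admits a contractually Nash-stable partition}\big)=1.$$
   Context: Additively separable hedonic game: a finite agent set $N$ and utilities $u_a(b)\in\mathbb R$ for ordered pairs $a\ne b$; for a coalition $C\ni a$, $u_a(C)=\sum_{b\in C\setminus\{a\}}u_a(b)$ (empty sum $0$). Random model $H(n,\mathcal D)$: $|N|=n$ and all $u_a(b)$, $a\ne b$, i.i.d. from $\mathcal D$. For a partition $\pi$, $\pi(a)$ is $a$'s coalition. A Nash deviation of $a$ is a move of $a$ alone to another coalition $C\in\pi$ or to a new singleton, such that $a$'s new coalition gives $a$ strictly higher utility. $\mathrm{FavorIn}(C,a)=\{b\in C\setminus\{a\}: u_b(C\cup\{a\})>u_b(C\setminus\{a\})\}$. A contractual deviation is a Nash deviation by $a$ with $\mathrm{FavorIn}(\pi(a),a)=\emptyset$; $\pi$ is contractually Nash-stable if no contractual deviation exists. *)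

(* Defs.v *)
From HB Require Import structures.
From mathcomp Require Import all_boot all_order all_algebra.
From mathcomp Require Import all_classical all_reals all_analysis.
Set Implicit Arguments. Unset Strict Implicit. Unset Printing Implicit Defensive.
Import Order.TTheory GRing.Theory Num.Theory.
Local Open Scope ring_scope.

Section Hedonic.
Variables (R : realType) (n : nat).
(* utilities u a b = u_a(b); the diagonal values are never used *)
Implicit Types (u : 'I_n -> 'I_n -> R) (C : {set 'I_n}) (Pi : {set {set 'I_n}}).

Definition util u (a : 'I_n) C : R := \sum_(b in C | b != a) u a b.

Definition favor_in u C (a : 'I_n) : {set 'I_n} :=
  [set b in C | (b != a) && (util u b (C :\ a) < util u b (a |: C))].

Definition nash_deviation u Pi (a : 'I_n) (Cnew : {set 'I_n}) : Prop :=
  ((exists C, [&& (C \in Pi)%bool & (C != finset.pblock Pi a)] /\ Cnew = a |: C) \/ Cnew = [set a])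
  /\ util u a (finset.pblock Pi a) < util u a Cnew.

Definition contractual_deviation u Pi (a : 'I_n) (Cnew : {set 'I_n}) : Prop :=
  nash_deviation u Pi a Cnew /\ favor_in u (finset.pblock Pi a) a = finset.set0.

Definition contractually_nash_stable u Pi : Prop :=
  finset.partition Pi [set: 'I_n] /\
  forall a Cnew, ~ contractual_deviation u Pi a Cnew.

Definition admits_CNS u : Prop := exists Pi, contractually_nash_stable u Pi.
End Hedonic.

Definition mutually_independent (R : realType) (d : measure_display)
  (T : measurableType d) (P : probability T R) (I : finType)
  (X : I -> T -> R) : Prop :=
  forall (S : {set I}) (B : I -> set R),
    (forall i, measurable (B i)) ->
    P (\bigcap_(i in [set` S]) (X i @^-1` B i))%classic
    = (\prod_(i in S) P (X i @^-1` B i)%classic)%E.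

(* Main.v *)
Require Import Defs.
From HB Require Import structures.
From mathcomp Require Import all_boot all_order all_algebra.
From mathcomp Require Import all_classical all_reals all_analysis.
From mathcomp Require Import lra.
Import Order.TTheory GRing.Theory Num.Theory.
Local Open Scope ring_scope.
Local Open Scope ring_scope.

Section Det.
Variables (R : realType) (n : nat).

Lemma pblock_all (f : 'I_n -> unit) (a : 'I_n) :
  finset.pblock (preim_partition f [set: 'I_n]) a = [set: 'I_n].
Proof.
apply/setP => y; rewrite inE pblock_equivalence_partition ?inE //.
Qed.

Lemma pblock_id (a : 'I_n) :
  finset.pblock (preim_partition id [set: 'I_n]) a = [set a].
Proof.
apply/setP => y; rewrite inE pblock_equivalence_partition ?inE //.
by split=> // /eqP->.
Qed.

Lemma L1 (u : 'I_n -> 'I_n -> R) :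
  (forall a b, a != b -> u a b <= 0) -> admits_CNS u.
Proof.
move=> H; exists (preim_partition id [set: 'I_n]); split.
  exact: preim_partitionP.
move=> a Cnew [[_ Hlt] _]; move: Hlt; rewrite pblock_id.
have -> : util u a [set a] = 0.
  by rewrite /util big1 // => b /andP[]; rewrite inE => /eqP ->; rewrite eqxx.
apply/negP; rewrite -leNgt /util.
by apply: sumr_le0 => b /andP[_ ba]; apply: H; rewrite eq_sym.
Qed.

Lemma L2 (u : 'I_n -> 'I_n -> R) :
  (forall a, exists b, b != a /\ 0 < u b a) -> admits_CNS u.
Proof.
move=> H; set f := fun _ : 'I_n => tt.
have PP := preim_partitionP f [set: 'I_n].
exists (preim_partition f [set: 'I_n]); split => //.
move=> a Cnew [_ Hf]; move: Hf; rewrite pblock_all => Hf.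
have [b [ba ub]] := H a.
have : b \in favor_in u [set: 'I_n] a; last by rewrite Hf inE.
rewrite inE finset.in_setT ba /=.
have -> : a |: [set: 'I_n] = [set: 'I_n] by apply/setP => y; rewrite !inE orbT.
rewrite /util [X in _ < X](bigD1 a) /=; last by rewrite finset.in_setT eq_sym ba.
have -> : \sum_(i in [set: 'I_n] :\ a | i != b) u b i =
          \sum_(i in [set: 'I_n] | (i != b) && (i != a)) u b i.
  by apply: eq_bigl => i; rewrite !inE andbT andbC.
have E (x y z : R) : 0 < x -> y = z -> y < x + z.
  by move=> x0 ->; rewrite -[X in X < _]add0r ltrD2r.
apply: E => //; apply: eq_bigl => i; by rewrite !finset.in_setT.
Qed.
End Det.
Local Open Scope ring_scope.
Local Open Scope classical_set_scope.
Set Implicit Arguments. Unset Strict Implicit.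

Section Meas.
Variables (d : measure_display) (T : measurableType d) (R : realType).

Definition mP (A : T -> Prop) := measurable [set w | A w].

Lemma mP_ext {A B : T -> Prop} : (forall w, A w <-> B w) -> mP A -> mP B.
Proof.
move=> H; rewrite /mP (_ : [set w | B w] = [set w | A w]) //.
by apply/funext => w; apply/propext; split => /H.
Qed.

Lemma mP_and A B : mP A -> mP B -> mP (fun w => A w /\ B w).
Proof. exact: measurableI. Qed.

Lemma mP_or A B : mP A -> mP B -> mP (fun w => A w \/ B w).
Proof. exact: measurableU. Qed.

Lemma mP_not A : mP A -> mP (fun w => ~ A w).
Proof. exact: measurableC. Qed.

Lemma mP_const (Q : Prop) : mP (fun _ => Q).
Proof.
case: (pselect Q) => HQ.
  by apply: (mP_ext (A := fun _ => True)) => //; rewrite /mP; exact: measurableT.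
by apply: (mP_ext (A := fun _ => False)) => //; rewrite /mP; exact: measurable0.
Qed.

Lemma mP_exists_seq (F : eqType) (s : seq F) (Q : F -> T -> Prop) :
  (forall x, mP (Q x)) -> mP (fun w => exists x, x \in s /\ Q x w).
Proof.
move=> HQ; elim: s => [|y s IH].
  by apply: (mP_ext (A := fun _ => False)) => //; [split=> // [[x []]]|exact: mP_const].
apply: (mP_ext (A := fun w => Q y w \/ exists x, x \in s /\ Q x w)); last exact: mP_or.
move=> w; split.
  by case=> [Hy|[x [xs Hx]]]; [exists y; rewrite inE eqxx|exists x; rewrite inE xs orbT].
by case=> x []; rewrite inE => /orP[/eqP->|xs Hx]; [left|right; exists x].
Qed.

Lemma mP_exists (F : finType) (Q : F -> T -> Prop) :
  (forall x, mP (Q x)) -> mP (fun w => exists x, Q x w).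
Proof.
move=> HQ; apply: (mP_ext (A := fun w => exists x, x \in enum F /\ Q x w)).
  by move=> w; split=> [[x [_ H]]|[x H]]; exists x => //; rewrite mem_enum.
exact: mP_exists_seq.
Qed.

Lemma mP_forall (F : finType) (Q : F -> T -> Prop) :
  (forall x, mP (Q x)) -> mP (fun w => forall x, Q x w).
Proof.
move=> HQ; apply: (mP_ext (A := fun w => ~ exists x, ~ Q x w)).
  move=> w; split => [H x|H [x]]; last by apply.
  by apply: contrapT => Hx; apply: H; exists x.
by apply: mP_not; apply: mP_exists => x; apply: mP_not.
Qed.

Lemma mP_lt (f g : T -> R) : measurable_fun setT f -> measurable_fun setT g ->
  mP (fun w => f w < g w).
Proof.
move=> mf mg.
have mh : measurable_fun setT (fun w => g w - f w) by exact: measurable_realfun.measurable_funB.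
have := mh measurableT `]0, +oo[%classic (measurable_itv _).
rewrite setTI; apply: mP_ext => w /=; rewrite in_itv /= andbT subr_gt0.
by split.
Qed.

End Meas.

Lemma favor_in0 (R : realType) (n : nat) (u : 'I_n -> 'I_n -> R) C a :
  favor_in u C a = finset.set0 <->
  forall b, ~ ((b \in C) /\ (b != a) /\ util u b (C :\ a) < util u b (a |: C)).
Proof.
split.
  move=> H b [bC [ba lt]].
  have : b \in favor_in u C a by rewrite inE bC ba.
  by rewrite H inE.
move=> H; apply/setP => b; rewrite !inE.
by apply/negP => /and3P[bC ba lt]; apply: (H b).
Qed.

Section Target.
Variables (d : measure_display) (T : measurableType d) (R : realType).

Lemma mutil n (X : 'I_n -> 'I_n -> T -> R) a C :
  (forall a b, measurable_fun setT (X a b)) ->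
  measurable_fun setT (fun w => util (fun a b => X a b w) a C).
Proof.
move=> HX.
rewrite (_ : (fun w => _) = (fun w => \sum_(b <- index_enum 'I_n)
   (if (b \in C) && (b != a) then X a b w else 0))); last first.
  by apply/funext => w; rewrite /util big_mkcond.
apply: measurable_sum => b; case: ((b \in C) && (b != a)); [exact: HX|exact: measurable_cst].
Qed.

Lemma meas_target n (X : 'I_n -> 'I_n -> T -> R) :
  (forall a b, measurable_fun setT (X a b)) ->
  mP (fun w => admits_CNS (fun a b => X a b w)).
Proof.
move=> HX; rewrite /admits_CNS; apply: mP_exists => Pi.
rewrite /contractually_nash_stable; apply: mP_and; first exact: mP_const.
apply: mP_forall => a; apply: mP_forall => Cnew; apply: mP_not.
rewrite /contractual_deviation /nash_deviation.
apply: mP_and; first apply: mP_and.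
- apply: mP_or; last exact: mP_const.
  by apply: mP_exists => C; exact: mP_const.
- by apply: mP_lt; apply: mutil.
- apply: (mP_ext (A := fun w => forall b, ~ ((b \in finset.pblock Pi a) /\ (b != a) /\
     util (fun a b => X a b w) b (finset.pblock Pi a :\ a) <
     util (fun a b => X a b w) b (a |: finset.pblock Pi a)))).
    by move=> w; symmetry; apply: favor_in0.
  apply: mP_forall => b; apply: mP_not; apply: mP_and; first exact: mP_const.
  apply: mP_and; first exact: mP_const.
  by apply: mP_lt; apply: mutil.
Qed.
End Target.

Local Close Scope classical_set_scope.
Local Open Scope ring_scope.
Local Open Scope classical_set_scope.

Section Sq.
Variable R : realType.

Lemma bern (h : R) {m : nat} : 0 <= h ->
  1 + m%:R * h + m%:R * (m%:R - 1) / 2 * h ^+ 2 <= (1 + h) ^+ m.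
Proof.
move=> h0; elim: m => [|m IH]; first by rewrite expr0 mul0r !mul0r !addr0.
have hm : 0 <= m%:R * (m%:R - 1) :> R.
  case: m {IH} => [|m]; first by rewrite mul0r.
  by apply: mulr_ge0 => //; rewrite -natr1 addrK.
have h3 : 0 <= m%:R * (m%:R - 1) * (h * h * h) :> R by apply: mulr_ge0 => //; rewrite !mulr_ge0.
have m0 : 0 <= m%:R :> R by [].
rewrite [(1 + h) ^+ m.+1]exprS -natr1.
have E : (1 + h) * (1 + h) ^+ m >= (1 + h) * (1 + m%:R * h + m%:R * (m%:R - 1) / 2 * h ^+ 2).
  by apply: ler_wpM2l => //; lra.
apply: (le_trans _ E); rewrite !expr2; nra.
Qed.

Lemma hcvg (c : R) : (fun k => c * harmonic k) @ \oo --> 0.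
Proof. have := @cvgMl_tmp R nat \oo _ (@harmonic R) c 0 (@cvg_harmonic R). rewrite mulr0 => H; exact: H. Qed.

Lemma nr_cvg (r : R) : 0 <= r -> r < 1 ->
  (fun n => n%:R * r ^+ n.-1) @ \oo --> 0.
Proof.
move=> r0 r1; set h := 1 - r.
have h0 : 0 < h by rewrite subr_gt0.
have key k : (k.+3)%:R * r ^+ k.+2 <= 4 / h ^+ 2 * harmonic k.
  have B := @bern h k.+2 (ltW h0).
  have rh : 0 <= r * (1 + h) <= 1 by apply/andP; split; [apply: mulr_ge0; lra| rewrite /h; nra].
  have P1 : (r * (1 + h)) ^+ k.+2 <= 1 by apply: exprn_ile1; case/andP: rh.
  rewrite exprMn in P1.
  set x := r ^+ k.+2 in P1 *.
  have x0 : 0 <= x by exact: exprn_ge0.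
  have hk : 0 <= h ^+ 2 * (k%:R + 1) by apply: mulr_ge0; [exact: sqr_ge0|rewrite addr_ge0].
  have h2 : 0 <= h ^+ 2 by exact: sqr_ge0.
  have Q : x * ((k%:R + 2) * (k%:R + 1) / 2 * h ^+ 2) <= 1.
    apply: le_trans P1; apply: ler_wpM2l => //; apply: le_trans B.
    rewrite -addn2 natrD.
    have : 0 <= (k%:R + 2) * h :> R by apply: mulr_ge0 => //; exact: ltW.
    have -> : (2%:R : R) = 2 by [].
    lra.
  have E : h ^+ 2 > 0 by exact: exprn_gt0.
  rewrite /harmonic /= -mulrA -invfM ler_pdivlMr; last first.
    by apply: mulr_gt0 => //; rewrite ltr0n.
  have e3 : (k.+3)%:R = k%:R + 3 :> R by rewrite -addn3 natrD.
  have e1 : (k.+1)%:R = k%:R + 1 :> R by rewrite -addn1 natrD.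
  rewrite e3 e1.
  have K0 : 0 <= k%:R :> R by [].
  have hx : 0 <= x * (h ^+ 2 * (k%:R + 1)) by exact: mulr_ge0.
  nra.
suff H : (fun k => (k + 3)%:R * r ^+ (k + 3).-1) @ \oo --> 0.
  by have := @cvg_shiftn 3 R^o (fun n => n%:R * r ^+ n.-1) (nbhs 0); move=> <-.
apply: (@squeeze_cvgr _ _ _ _ (fun=> 0) (fun k => 4 / h ^+ 2 * harmonic k)).
- by near=> k; rewrite addn3 /= key andbT; apply: mulr_ge0 => //; exact: exprn_ge0.
- exact: (@cvg_cst R^o).
- exact: hcvg.
Unshelve. all: by end_near.
Qed.
End Sq.

Local Close Scope classical_set_scope.
Local Open Scope ring_scope.


Section UB.
Local Open Scope classical_set_scope.
Lemma union_bound (R : realType) (d : measure_display) (T : measurableType d)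
  (mu : probability T R) (I : eqType) (s : seq I) (F : I -> set T) :
  (forall i, measurable (F i)) ->
  forall A : set T, measurable A -> (forall w, A w -> exists i, i \in s /\ F i w) ->
  (mu A <= \sum_(i <- s) mu (F i))%E.
Proof.
move=> mF; elim: s => [|y s IH] A mA HA.
  rewrite big_nil (_ : A = set0) ?measure0 //.
  by apply/funext => w; apply/propext; split => // /HA [i []].
rewrite big_cons.
have mAD : measurable (A `\` F y) by exact: measurableD.
apply: (@le_trans _ _ (mu (F y `|` (A `\` F y)))).
  apply: le_measure; rewrite ?inE //; first exact: measurableU.
  by move=> w Aw; case: (pselect (F y w)) => H; [left|right].
apply: le_trans (measureU2 _ (mF y) mAD) _.
apply: leeD2l; apply: IH => // w [Aw nF].
have [i [] ] := HA w Aw; rewrite inE => /orP[/eqP ->|si] Fi //.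
by exists i.
Qed.
End UB.

Lemma card_S n (a : 'I_n) :
  (n.-1 <= #|[set ab : {ab : 'I_n * 'I_n | ab.1 != ab.2} | (val ab).2 == a]|)%N.
Proof.
set S := [set ab : {ab : 'I_n * 'I_n | ab.1 != ab.2} | (val ab).2 == a].
have -> : n.-1 = #|[set~ a]| by rewrite finset.cardsC1 card_ord.
have inj : injective (fun b : 'I_n => (b, a)) by move=> x y [].
rewrite -(card_imset _ inj) -(card_imset S val_inj).
apply: subset_leq_card; apply/fintype.subsetP => _ /imsetP[b Hb ->].
have ba : (b, a).1 != (b, a).2 by move: Hb; rewrite !inE.
by apply/imsetP; exists (exist _ (b, a) ba) => //; rewrite inE /=.
Qed.

Unset Implicit Arguments. Set Strict Implicit.
Theorem proposition1 (R : realType) (D : probability (measurableTypeR R) R)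
  (d : measure_display) (T : measurableType d) (P : probability T R)
  (X : forall n : nat, 'I_n -> 'I_n -> {RV P >-> R}) :
  (forall n (a b : 'I_n), a != b ->
     forall B : set R, measurable B -> P (X n a b @^-1` B)%classic = D B) ->
  (forall n, mutually_independent P
     (fun ab : {ab : 'I_n * 'I_n | ab.1 != ab.2} => X n (val ab).1 (val ab).2)) ->
  ((fun n => P [set w | admits_CNS (fun a b => X n a b w)]%classic) @ \oo
    --> 1%E)%classic.
Proof.
move=> HD Hind.
set tgt := fun n => [set w | admits_CNS (fun a b => X n a b w)]%classic.
have mt n : measurable (tgt n).
  exact: (meas_target (X := fun a b => X n a b) (fun a b => measurable_funP (X n a b))).
have mX n a b : measurable_fun setT (X n a b) by exact: measurable_funP.
have mpre n a b (B : set R) : measurable B -> measurable (X n a b @^-1` B)%classic.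
  by move=> mB; have := mX n a b measurableT B mB; rewrite setTI.
have mpos : measurable (`]0, +oo[%classic : set R) by exact: measurable_itv.
set p := D `]0, +oo[%classic.
have HP1 n : P (tgt n) = (1 - P (~` tgt n)%classic)%E.
  by rewrite -probability_setC ?setCK //; exact: measurableC.
case: (eqVneq p 0%E) => [p0|pn0].
  have H n : P (tgt n) = 1%E.
    pose F := fun ab : 'I_n * 'I_n =>
      if ab.1 != ab.2 then (X n ab.1 ab.2 @^-1` `]0, +oo[)%classic else set0.
    have mF ab : measurable (F ab).
      by rewrite /F; case: ifP => _; [exact: mpre|exact: measurable0].
    have PF ab : P (F ab) = 0%E.
      by rewrite /F; case: ifP => ab12; [rewrite HD|rewrite measure0].
    have Hle := @union_bound R d T P _ (index_enum ('I_n * 'I_n)%type) F mF _ (measurableC (mt n)).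
    have Hc : P (~` tgt n)%classic = 0%E.
      apply/le_anti/andP; split; last exact: measure_ge0.
      apply: le_trans (Hle _) _; last by rewrite big1.
      move=> w nt; apply: contrapT => Hno; apply: nt; apply: L1 => a b ab.
      rewrite leNgt; apply/negP => pos; apply: Hno; exists (a, b).
      split; first exact: mem_index_enum.
      by rewrite /F /= ab /= in_itv /= andbT.
    by rewrite HP1 Hc sube0.
  rewrite (_ : (fun n => _) = (fun _ => 1%E)); first exact: cvg_cst.
  by apply/funext => n; exact: H.
have pge0 : (0 <= p)%E by exact: measure_ge0.
have ple1 : (p <= 1)%E by exact: probability_le1.
have pfin : p \is a fin_num.
  by rewrite ge0_fin_numE //; apply: le_lt_trans ple1 _; exact: ltry.
set pr := fine p.
have pE : p = pr%:E by rewrite fineK.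
have pr0 : 0 < pr.
  by rewrite -lte_fin -pE lt_neqAle eq_sym pn0 pge0.
have pr1 : pr <= 1 by rewrite -lee_fin -pE.
set r := 1 - pr.
have r0 : 0 <= r by rewrite /r; lra.
have r1 : r < 1 by rewrite /r; lra.
set Bq := (~` `]0, +oo[)%classic : set R.
have mBq : measurable Bq := measurableC mpos.
have DBq : D Bq = r%:E by rewrite probability_setC // -/p pE EFinB.
have bound n : ((1 - n%:R * r ^+ n.-1)%:E <= P (tgt n))%E.
  pose S a := [set ab : {ab : 'I_n * 'I_n | ab.1 != ab.2} | (val ab).2 == a].
  pose Xs := fun ab : {ab : 'I_n * 'I_n | ab.1 != ab.2} => X n (val ab).1 (val ab).2.
  pose A a := (\bigcap_(i in [set` S a]) (Xs i @^-1` Bq))%classic.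
  have mA a : measurable (A a).
    have : mP (fun w => forall i, (i \in S a) -> Bq (Xs i w)).
      apply: mP_forall => i; case: (boolP (i \in S a)) => iS.
        apply: (mP_ext (A := fun w => Bq (Xs i w))); first by move=> w; split => [H _|H]; [|apply: H].
        exact: mpre.
      apply: (mP_ext (A := fun _ => True)); last exact: mP_const.
      by move=> w; split => // _ iS'; rewrite iS' in iS.
    by [].
  have PA a : (P (A a) <= (r ^+ n.-1)%:E)%E.
    rewrite /A (Hind n (S a) (fun _ => Bq)); last by move=> _; exact: mBq.
    rewrite (eq_bigr (fun _ => r%:E)); last first.
      by move=> i _; rewrite /Xs HD ?DBq //; exact: (valP i).
    rewrite prodEFin prodr_const lee_fin; apply: ler_wiXn2l => //; first exact: ltW.
    exact: card_S.
  have Hle := @union_bound R d T P _ (index_enum 'I_n) A mA _ (measurableC (mt n)).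
  have cover : forall w, (~` tgt n)%classic w -> exists a, a \in index_enum 'I_n /\ A a w.
    move=> w nt; apply: contrapT => Hno; apply: nt; apply: L2 => a.
    apply: contrapT => Hb; apply: Hno; exists a; split; first exact: mem_index_enum.
    move=> i /= iS pos; move: iS; rewrite inE => /eqP ia.
    apply: Hb; exists (val i).1; split; first by rewrite -ia; exact: (valP i).
    by move: pos; rewrite /= in_itv /= andbT -ia.
  have Hc : (P (~` tgt n)%classic <= (n%:R * r ^+ n.-1)%:E)%E.
    apply: (le_trans (Hle cover)).
    apply: (@le_trans _ _ (\sum_(a : 'I_n) (r ^+ n.-1)%:E)%E).
      by apply: lee_sum => a _; exact: PA.
    by rewrite sumEFin sumr_const card_ord lee_fin mulr_natl.
  by rewrite HP1 EFinB; apply: leeB.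
apply: (@squeeze_cvge _ _ _ R (fun n => (1 - n%:R * r ^+ n.-1)%:E) _ (fun=> 1%E)).
- near=> n; apply/andP; split; first exact: bound.
  exact: (probability_le1 P (mt n)).
- apply: cvg_EFin; first by near=> n.
  rewrite (_ : fine \o _ = fun n => 1 - n%:R * r ^+ n.-1) //.
  rewrite -[X in (_ --> X)%classic]subr0; apply: cvgB; first exact: (@cvg_cst R^o).
  exact: nr_cvg.
- exact: cvg_cst.
Unshelve. all: by end_near.
Qed.
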